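(* Let $\beta>\alpha>0$ and let $q=(q_1,q_2,q_3,q_4)$ be a convex non-collinear central configuration of the planar Newtonian 4-body problem with masses $m_1=m_2=\beta$, $m_3=m_4=\alpha$, with $q_1,q_2,q_3,q_4$ in cyclic order around the convex quadrilateral. If $r_{13}=r_{24}$, then $\Delta_4=-\Delta_3$.
   Context: Bodies have positions $q_i\in\mathbb{R}^2$ and masses $m_i>0$; $r_{ij}=\|q_i-q_j\|$; $U(q)=\sum_{i<j}m_im_j/r_{ij}$. A configuration with distinct points and $\sum_i m_iq_i=0$ is a central configuration if $\sum_{j\neq i} m_j\frac{q_j-q_i}{r_{ij}^3}=\lambda q_i$ for all $i$ and some constant $\lambda$. ''Convex non-collinear'': the four points are vertices of a strictly convex quadrilateral. For $1\le i\le 4$, $|\Delta_i|$ denotes the area of the triangle formed by the three points $q_j$, $j\neq i$, and the oriented areas are $\Delta_1=-|\Delta_1|$, $\Delta_2=|\Delta_2|$, $\Delta_3=-|\Delta_3|$, $\Delta_4=|\Delta_4|$; they satisfy $\Delta_1+\Delta_2+\Delta_3+\Delta_4=0$. *)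

(* Defs.v *)
From Stdlib Require Import Reals Lra Lia.
Open Scope R_scope.

(* Positions of the four bodies: q : nat -> R*R, bodies indexed 1..4. *)

Definition sum4 (f : nat -> R) : R := f 1%nat + f 2%nat + f 3%nat + f 4%nat.

Definition rdist (q : nat -> R * R) (i j : nat) : R :=
  sqrt ((fst (q i) - fst (q j)) ^ 2 + (snd (q i) - snd (q j)) ^ 2).

Definition is_body (i : nat) : Prop := (1 <= i <= 4)%nat.

Definition central_configuration4 (m : nat -> R) (q : nat -> R * R) : Prop :=
  (forall i j, is_body i -> is_body j -> i <> j -> q i <> q j) /\
  sum4 (fun i => m i * fst (q i)) = 0 /\
  sum4 (fun i => m i * snd (q i)) = 0 /\
  exists lam : R, forall i, is_body i ->
    sum4 (fun j => if Nat.eqb j i then 0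
                   else m j * (fst (q j) - fst (q i)) / rdist q i j ^ 3)
      = lam * fst (q i) /\
    sum4 (fun j => if Nat.eqb j i then 0
                   else m j * (snd (q j) - snd (q i)) / rdist q i j ^ 3)
      = lam * snd (q i).

Definition sarea (a b c : R * R) : R :=
  ((fst b - fst a) * (snd c - snd a) - (fst c - fst a) * (snd b - snd a)) / 2.

(* q1,q2,q3,q4 are, in this cyclic order, the vertices of a strictly convex
   quadrilateral: the four consecutive triangles are all nondegenerate and
   have the same orientation. *)
Definition convex_cyclic4 (q : nat -> R * R) : Prop :=
  let t1 := sarea (q 1%nat) (q 2%nat) (q 3%nat) in
  let t2 := sarea (q 2%nat) (q 3%nat) (q 4%nat) in
  let t3 := sarea (q 3%nat) (q 4%nat) (q 1%nat) in
  let t4 := sarea (q 4%nat) (q 1%nat) (q 2%nat) in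
  (0 < t1 /\ 0 < t2 /\ 0 < t3 /\ 0 < t4) \/ (t1 < 0 /\ t2 < 0 /\ t3 < 0 /\ t4 < 0).

Definition absDelta (q : nat -> R * R) (i : nat) : R :=
  match i with
  | 1%nat => Rabs (sarea (q 2%nat) (q 3%nat) (q 4%nat))
  | 2%nat => Rabs (sarea (q 1%nat) (q 3%nat) (q 4%nat))
  | 3%nat => Rabs (sarea (q 1%nat) (q 2%nat) (q 4%nat))
  | _ => Rabs (sarea (q 1%nat) (q 2%nat) (q 3%nat))
  end.

Definition oDelta (q : nat -> R * R) (i : nat) : R :=
  if Nat.odd i then - absDelta q i else absDelta q i.

(* Main.v *)
Require Import Defs.
From Stdlib Require Import Reals Lra Psatz Lia.
Open Scope R_scope.

Lemma cube_inj a b: 0<a -> 0<b -> a^3 = b^3 -> a = b.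
Proof. intros. destruct (Rtotal_order a b) as [h|[h|h]]; auto.
- assert (a*a < b*b) by nra. assert (a*a*a < b*b*b) by nra. exfalso; simpl in *; nra.
- assert (b*b < a*a) by nra. assert (b*b*b < a*a*a) by nra. exfalso; simpl in *; nra. Qed.

Lemma sq_inj a b: 0<a -> 0<b -> a^2 = b^2 -> a = b.
Proof. intros. destruct (Rtotal_order a b) as [h|[h|h]]; auto; exfalso; simpl in *; nra. Qed.

Lemma gen (M L lam c1 c2 c3 s1 s2 s3 w1 w2 w3 xi C : R):
 L*M = lam -> c1*w1*s1 + c2*w2*s2 + c3*w3*s3 = lam*xi -> C = 0 ->
 c1*w1+c2*w2+c3*w3 = C - M*xi ->
 c1*(s1+L)*w1 + c2*(s2+L)*w2 + c3*(s3+L)*w3 = 0.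
Proof.
 intros H1 H2 H3 H4.
 replace (c1*(s1+L)*w1 + c2*(s2+L)*w2 + c3*(s3+L)*w3) with
   ((c1*w1*s1+c2*w2*s2+c3*w3*s3) + L*(c1*w1+c2*w2+c3*w3)) by ring.
 rewrite H2, H4, H3, <- H1. ring.
Qed.

Lemma crossL A B C ux uy vx vy wx wy zx zy:
  A*ux+B*vx+C*wx = 0 -> A*uy+B*vy+C*wy=0 ->
  A*(ux*zy-uy*zx) + B*(vx*zy-vy*zx) + C*(wx*zy-wy*zx) = 0.
Proof.
 intros H1 H2.
 replace (A*(ux*zy-uy*zx) + B*(vx*zy-vy*zx) + C*(wx*zy-wy*zx)) with
   ((A*ux+B*vx+C*wx)*zy - (A*uy+B*vy+C*wy)*zx) by ring.
 rewrite H1, H2. ring.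
Qed.

Lemma mz3 c x y: c*x*y = 0 -> c <> 0 -> y <> 0 -> x = 0.
Proof. intros H Hc Hy. destruct (Rmult_integral _ _ H) as [h|h]; [|contradiction].
 destruct (Rmult_integral _ _ h); [contradiction|auto]. Qed.

Lemma mz3' c x y: c*x*y = 0 -> c <> 0 -> x <> 0 -> y = 0.
Proof. intros H Hc Hy. destruct (Rmult_integral _ _ H) as [h|h]; [|auto].
 destruct (Rmult_integral _ _ h); contradiction. Qed.

Lemma gram_id x1 y1 x2 y2 x3 y3 x4 y4 :
  8*((x1-x2)^2+(y1-y2)^2)*((x1-x3)^2+(y1-y3)^2)*((x1-x4)^2+(y1-y4)^2)
  + 2*(((x1-x2)^2+(y1-y2)^2)+((x1-x3)^2+(y1-y3)^2)-((x2-x3)^2+(y2-y3)^2))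
     *(((x1-x3)^2+(y1-y3)^2)+((x1-x4)^2+(y1-y4)^2)-((x3-x4)^2+(y3-y4)^2))
     *(((x1-x2)^2+(y1-y2)^2)+((x1-x4)^2+(y1-y4)^2)-((x2-x4)^2+(y2-y4)^2))
  - 2*((x1-x2)^2+(y1-y2)^2)*(((x1-x3)^2+(y1-y3)^2)+((x1-x4)^2+(y1-y4)^2)-((x3-x4)^2+(y3-y4)^2))^2
  - 2*((x1-x3)^2+(y1-y3)^2)*(((x1-x2)^2+(y1-y2)^2)+((x1-x4)^2+(y1-y4)^2)-((x2-x4)^2+(y2-y4)^2))^2
  - 2*((x1-x4)^2+(y1-y4)^2)*(((x1-x2)^2+(y1-y2)^2)+((x1-x3)^2+(y1-y3)^2)-((x2-x3)^2+(y2-y3)^2))^2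
  = 0.
Proof. ring. Qed.

Lemma gram x1 y1 x2 y2 x3 y3 x4 y4 R :
  (x1-x2)^2+(y1-y2)^2 = R -> (x1-x3)^2+(y1-y3)^2 = R -> (x1-x4)^2+(y1-y4)^2 = R ->
  (x2-x3)^2+(y2-y3)^2 = R -> (x2-x4)^2+(y2-y4)^2 = R -> (x3-x4)^2+(y3-y4)^2 = R ->
  0 < R -> False.
Proof.
  intros H12 H13 H14 H23 H24 H34 HR.
  pose proof (gram_id x1 y1 x2 y2 x3 y3 x4 y4) as G.
  rewrite H12, H13, H14, H23, H24, H34 in G.
  assert (R*R*R > 0) by (apply Rmult_lt_0_compat; nra).
  lra.
Qed.

Lemma geo x1 y1 x2 y2 x3 y3 x4 y4 :
  sarea (x1,y1) (x2,y2) (x3,y3) = sarea (x2,y2) (x3,y3) (x4,y4) ->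
  0 < sarea (x2,y2) (x3,y3) (x4,y4) * sarea (x3,y3) (x4,y4) (x1,y1) ->
  0 < (x3-x2)^2+(y3-y2)^2 ->
  (x1-x3)^2+(y1-y3)^2 = (x2-x4)^2+(y2-y4)^2 ->
  (x1-x2)^2+(y1-y2)^2 = (x3-x4)^2+(y3-y4)^2.
Proof.
  unfold sarea; cbn [fst snd]. intros H1 H2 HN Hd.
  set (N := (x3-x2)^2+(y3-y2)^2) in *.
  set (K := (x3-x2)*(x1-x4) + (y3-y2)*(y1-y4)).
  assert (H0 : (x3-x2)*(y1-y4) - (y3-y2)*(x1-x4) = 0) by lra.
  assert (A1 : N*(x1-x4) = K*(x3-x2)).
  { replace (N*(x1-x4)) with (K*(x3-x2) - (y3-y2)*((x3-x2)*(y1-y4) - (y3-y2)*(x1-x4)))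
      by (unfold N, K; ring). rewrite H0; ring. }
  assert (A2 : N*(y1-y4) = K*(y3-y2)).
  { replace (N*(y1-y4)) with (K*(y3-y2) + (x3-x2)*((x3-x2)*(y1-y4) - (y3-y2)*(x1-x4)))
      by (unfold N, K; ring). rewrite H0; ring. }
  assert (NZ : N <> 0) by (intro Hz; rewrite Hz in HN; lra).
  set (k := K / N).
  assert (X1 : x1 = x4 + k*(x3-x2)).
  { apply (Rmult_eq_reg_l N); [|exact NZ].
    replace (N*(x4 + k*(x3-x2))) with (N*x4 + K*(x3-x2)) by (unfold k; field; exact NZ). lra. }
  assert (Y1 : y1 = y4 + k*(y3-y2)).
  { apply (Rmult_eq_reg_l N); [|exact NZ].
    replace (N*(y4 + k*(y3-y2))) with (N*y4 + K*(y3-y2)) by (unfold k; field; exact NZ). lra. }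
  clearbody k. clear A1 A2 H0. unfold N in *. clear N K. subst x1 y1.
  set (t2 := ((x3 - x2) * (y4 - y2) - (x4 - x2) * (y3 - y2)) / 2) in *.
  assert (T3 : (x4 - x3) * (y4 + k * (y3 - y2) - y3) - (x4 + k * (x3 - x2) - x3) * (y4 - y3) = -k*(2*t2)) by (unfold t2; field).
  rewrite T3 in H2.
  assert (Hk : k < 0) by nra.
  set (P := 2*((x3-x2)*(x4-x2)+(y3-y2)*(y4-y2)) + (k-1)*((x3-x2)^2+(y3-y2)^2)).
  assert (HP : (k-1)*P = 0) by (unfold P; lra).
  assert (P = 0).
  { destruct (Rmult_integral _ _ HP); auto. lra. }
  assert (F : (x4 + k * (x3 - x2) - x2) ^ 2 + (y4 + k * (y3 - y2) - y2) ^ 2 -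
    ((x3 - x4) ^ 2 + (y3 - y4) ^ 2) = (k+1)*P) by (unfold P; ring).
  rewrite H in F. lra.
Qed.

Lemma core (a b x1 y1 x2 y2 x3 y3 x4 y4 r12 r13 r14 r23 r24 r34 lam : R) :
  0 < a -> a < b ->
  0 < r12 -> 0 < r13 -> 0 < r14 -> 0 < r23 -> 0 < r24 -> 0 < r34 ->
  r12^2 = (x1-x2)^2+(y1-y2)^2 -> r13^2 = (x1-x3)^2+(y1-y3)^2 ->
  r14^2 = (x1-x4)^2+(y1-y4)^2 -> r23^2 = (x2-x3)^2+(y2-y3)^2 ->
  r24^2 = (x2-x4)^2+(y2-y4)^2 -> r34^2 = (x3-x4)^2+(y3-y4)^2 ->
  b*x1+b*x2+a*x3+a*x4 = 0 -> b*y1+b*y2+a*y3+a*y4 = 0 ->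
  0 + b*(x2-x1)/r12^3 + a*(x3-x1)/r13^3 + a*(x4-x1)/r14^3 = lam*x1 ->
  0 + b*(y2-y1)/r12^3 + a*(y3-y1)/r13^3 + a*(y4-y1)/r14^3 = lam*y1 ->
  b*(x1-x2)/r12^3 + 0 + a*(x3-x2)/r23^3 + a*(x4-x2)/r24^3 = lam*x2 ->
  b*(y1-y2)/r12^3 + 0 + a*(y3-y2)/r23^3 + a*(y4-y2)/r24^3 = lam*y2 ->
  b*(x1-x3)/r13^3 + b*(x2-x3)/r23^3 + 0 + a*(x4-x3)/r34^3 = lam*x3 ->
  b*(y1-y3)/r13^3 + b*(y2-y3)/r23^3 + 0 + a*(y4-y3)/r34^3 = lam*y3 ->
  (let t1 := sarea (x1,y1) (x2,y2) (x3,y3) in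
   let t2 := sarea (x2,y2) (x3,y3) (x4,y4) in
   let t3 := sarea (x3,y3) (x4,y4) (x1,y1) in
   let t4 := sarea (x4,y4) (x1,y1) (x2,y2) in
   (0 < t1 /\ 0 < t2 /\ 0 < t3 /\ 0 < t4) \/ (t1 < 0 /\ t2 < 0 /\ t3 < 0 /\ t4 < 0)) ->
  r13 = r24 ->
  sarea (x1,y1) (x2,y2) (x3,y3) = sarea (x4,y4) (x1,y1) (x2,y2).
Proof.
  intros Ha Hab P12 P13 P14 P23 P24 P34 S12 S13 S14 S23 S24 S34 Cx Cy
    E1x E1y E2x E2y E3x E3y Hconv Hd.
  subst r24.
  set (L := lam/(2*a+2*b)).
  assert (HLM : L*(2*a+2*b) = lam) by (unfold L; field; lra).
  assert (V1x := gen (2*a+2*b) L lam b a a (/r12^3) (/r13^3) (/r14^3) (x2-x1) (x3-x1) (x4-x1) x1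
     _ HLM ltac:(rewrite <- E1x; unfold Rdiv; ring) Cx ltac:(ring)).
  assert (V1y := gen (2*a+2*b) L lam b a a (/r12^3) (/r13^3) (/r14^3) (y2-y1) (y3-y1) (y4-y1) y1
     _ HLM ltac:(rewrite <- E1y; unfold Rdiv; ring) Cy ltac:(ring)).
  assert (V2x := gen (2*a+2*b) L lam b a a (/r12^3) (/r23^3) (/r13^3) (x1-x2) (x3-x2) (x4-x2) x2
     _ HLM ltac:(rewrite <- E2x; unfold Rdiv; ring) Cx ltac:(ring)).
  assert (V2y := gen (2*a+2*b) L lam b a a (/r12^3) (/r23^3) (/r13^3) (y1-y2) (y3-y2) (y4-y2) y2
     _ HLM ltac:(rewrite <- E2y; unfold Rdiv; ring) Cy ltac:(ring)).
  assert (V3x := gen (2*a+2*b) L lam b b a (/r13^3) (/r23^3) (/r34^3) (x1-x3) (x2-x3) (x4-x3) x3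
     _ HLM ltac:(rewrite <- E3x; unfold Rdiv; ring) Cx ltac:(ring)).
  assert (V3y := gen (2*a+2*b) L lam b b a (/r13^3) (/r23^3) (/r34^3) (y1-y3) (y2-y3) (y4-y3) y3
     _ HLM ltac:(rewrite <- E3y; unfold Rdiv; ring) Cy ltac:(ring)).
  clear E1x E1y E2x E2y E3x E3y.
  set (e12 := /r12^3 + L) in *. set (e13 := /r13^3 + L) in *. set (e14 := /r14^3 + L) in *.
  set (e23 := /r23^3 + L) in *. set (e34 := /r34^3 + L) in *.
  set (t1 := sarea (x1,y1) (x2,y2) (x3,y3)) in *.
  set (t2 := sarea (x2,y2) (x3,y3) (x4,y4)) in *.
  set (t3 := sarea (x3,y3) (x4,y4) (x1,y1)) in *.
  set (t4 := sarea (x4,y4) (x1,y1) (x2,y2)) in *.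
  assert (T1 : t1 = ((x2-x1)*(y3-y1) - (x3-x1)*(y2-y1))/2) by reflexivity.
  assert (T2 : t2 = ((x3-x2)*(y4-y2) - (x4-x2)*(y3-y2))/2) by reflexivity.
  assert (T3 : t3 = ((x4-x3)*(y1-y3) - (x1-x3)*(y4-y3))/2) by reflexivity.
  assert (T4 : t4 = ((x1-x4)*(y2-y4) - (x2-x4)*(y1-y4))/2) by reflexivity.
  assert (TS : t1 + t3 = t2 + t4) by lra.
  assert (NZ : t1 <> 0 /\ t2 <> 0 /\ t3 <> 0 /\ t4 <> 0) by (simpl in Hconv; lra).
  destruct NZ as [N1 [N2 [N3 N4]]].
  assert (C1 : b*e12*t4 + a*e13*t3 = 0).
  { pose proof (crossL _ _ _ _ _ _ _ _ _ (x4-x1) (y4-y1) V1x V1y). rewrite ?T1, ?T2, ?T3, ?T4. lra. }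
  assert (C2 : b*e12*t1 + a*e13*t2 = 0).
  { pose proof (crossL _ _ _ _ _ _ _ _ _ (x3-x2) (y3-y2) V2x V2y). rewrite ?T1, ?T2, ?T3, ?T4. lra. }
  assert (C3 : b*e13*t3 + b*e23*t2 = 0).
  { pose proof (crossL _ _ _ _ _ _ _ _ _ (x4-x3) (y4-y3) V3x V3y). rewrite ?T1, ?T2, ?T3, ?T4. lra. }
  assert (C4 : b*e13*t1 + a*e34*t2 = 0).
  { pose proof (crossL _ _ _ _ _ _ _ _ _ (x2-x3) (y2-y3) V3x V3y). rewrite ?T1, ?T2, ?T3, ?T4. lra. }
  assert (C5 : b*e12*t1 - a*e14*t3 = 0).
  { pose proof (crossL _ _ _ _ _ _ _ _ _ (x3-x1) (y3-y1) V1x V1y). rewrite ?T1, ?T2, ?T3, ?T4. lra. }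
  assert (U1 : t1 = sarea (x1,y1) (x2,y2) (x3,y3)) by reflexivity.
  assert (U2 : t2 = sarea (x2,y2) (x3,y3) (x4,y4)) by reflexivity.
  assert (U3 : t3 = sarea (x3,y3) (x4,y4) (x1,y1)) by reflexivity.
  clear V1x V1y V2x V2y V3x V3y. clearbody t1 t2 t3 t4.
  assert (Heq : b*e12*(t4*t2 - t1*t3) = 0).
  { replace (b*e12*(t4*t2 - t1*t3)) with ((b*e12*t4 + a*e13*t3)*t2 - (b*e12*t1+a*e13*t2)*t3) by ring.
    rewrite C1, C2. ring. }
  assert (Hb0 : b <> 0) by lra. assert (Ha0 : a <> 0) by lra.
  destruct (Req_dec e12 0) as [E0|E0].
  - exfalso.
    assert (F13 : e13 = 0).
    { apply (mz3 a e13 t3); auto. rewrite E0 in C1. lra. }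
    assert (F23 : e23 = 0).
    { apply (mz3 b e23 t2); auto. rewrite F13 in C3. lra. }
    assert (F34 : e34 = 0).
    { apply (mz3 a e34 t2); auto. rewrite F13 in C4. lra. }
    assert (F14 : e14 = 0).
    { apply (mz3 a e14 t3); auto. rewrite E0 in C5. lra. }
    unfold e12, e13, e14, e23, e34 in *.
    assert (G : forall r, 0 < r -> /r^3 + L = 0 -> r = r12).
    { intros r Hr Hr'. apply cube_inj; auto.
      assert (/r^3 = /r12^3) by lra.
      rewrite <- (Rinv_inv (r^3)), <- (Rinv_inv (r12^3)). congruence. }
    assert (R13 := G r13 P13 F13). assert (R14 := G r14 P14 F14).
    assert (R23 := G r23 P23 F23). assert (R34 := G r34 P34 F34).
    rewrite R13 in S13, S24. rewrite R14 in S14. rewrite R23 in S23. rewrite R34 in S34.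
    apply (gram x1 y1 x2 y2 x3 y3 x4 y4 (r12^2)); auto. nra.
  - assert (X : t4*t2 - t1*t3 = 0) by (apply (mz3' b e12); auto).
    assert (Y : (t1-t2)*(t1-t4) = 0).
    { replace ((t1-t2)*(t1-t4)) with (t1*(t1+t3-t2-t4) + (t4*t2 - t1*t3)) by ring.
      rewrite X. replace (t1+t3-t2-t4) with 0 by lra. ring. }
    destruct (Rmult_integral _ _ Y) as [Y1|Y1]; [|lra].
    exfalso.
    assert (H34 : t3 = t4) by lra.
    assert (D1 : b*e12 + a*e13 = 0).
    { apply (mz3 1 _ t3); [|lra|auto]. rewrite H34 in C1 |- *. lra. }
    assert (D2 : b*e13 + a*e34 = 0).
    { apply (mz3 1 _ t2); [|lra|auto]. replace t1 with t2 in C4 by lra. lra. }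
    assert (R : r12 = r34).
    { apply sq_inj; auto. rewrite S12, S34.
      assert (HG := geo x1 y1 x2 y2 x3 y3 x4 y4).
      rewrite <- U1, <- U2, <- U3 in HG.
      assert (0 < t2*t3) by (simpl in Hconv; destruct Hconv as [[? [? [? ?]]]|[? [? [? ?]]]]; nra).
      assert (HN : 0 < (x3-x2)^2+(y3-y2)^2).
      { replace ((x3-x2)^2+(y3-y2)^2) with (r23^2) by (rewrite S23; ring). apply pow_lt; auto. }
      apply HG; auto; [lra|]. rewrite <- S13, <- S24. reflexivity. }
    assert (E34 : e34 = e12) by (unfold e34, e12; rewrite R; reflexivity).
    rewrite E34 in D2.
    assert (Z : (b-a)*(b+a)*e12 = 0).
    { replace ((b-a)*(b+a)*e12) with (b*(b*e12 + a*e13) - a*(b*e13 + a*e12)) by ring.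
      rewrite D1, D2. ring. }
    apply E0. apply (mz3 ((b-a)*(b+a)) e12 1); [lra| |lra].
    assert ((b-a)*(b+a) > 0) by nra. lra.
Qed.

Lemma rdist_sym q i j : rdist q i j = rdist q j i.
Proof. unfold rdist. f_equal. ring. Qed.

Lemma rdist_pos q i j : q i <> q j -> 0 < rdist q i j.
Proof.
  intros H. unfold rdist. apply sqrt_lt_R0.
  destruct (q i) as [a b], (q j) as [c d]; cbn [fst snd].
  destruct (Rle_lt_dec ((a - c) ^ 2 + (b - d) ^ 2) 0) as [h|h]; auto.
  exfalso. apply H.
  assert (h1 := pow2_ge_0 (a-c)). assert (h2 := pow2_ge_0 (b-d)).
  assert ((a-c)^2 = 0) by lra. assert ((b-d)^2 = 0) by lra.
  assert (a - c = 0) by (destruct (Req_dec (a-c) 0) as [e|e]; auto; exfalso; apply (pow_nonzero _ 2 e); auto).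
  assert (b - d = 0) by (destruct (Req_dec (b-d) 0) as [e|e]; auto; exfalso; apply (pow_nonzero _ 2 e); auto).
  f_equal; lra.
Qed.

Lemma rdist_sq q i j : rdist q i j ^ 2 = (fst (q i) - fst (q j))^2 + (snd (q i) - snd (q j))^2.
Proof. unfold rdist. apply pow2_sqrt. apply Rplus_le_le_0_compat; apply pow2_ge_0. Qed.

Theorem lemma3p3 (alpha beta : R) (m : nat -> R) (q : nat -> R * R) :
  0 < alpha -> alpha < beta ->
  m 1%nat = beta -> m 2%nat = beta -> m 3%nat = alpha -> m 4%nat = alpha ->
  central_configuration4 m q ->
  convex_cyclic4 q ->
  rdist q 1%nat 3%nat = rdist q 2%nat 4%nat ->
  oDelta q 4%nat = - oDelta q 3%nat.
Proof.
  intros Ha Hab Hm1 Hm2 Hm3 Hm4 [Hdist [Hcx [Hcy [lam Hl]]]] Hconv Hd.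
  destruct (Hl 1%nat ltac:(unfold is_body; lia)) as [E1x E1y].
  destruct (Hl 2%nat ltac:(unfold is_body; lia)) as [E2x E2y].
  destruct (Hl 3%nat ltac:(unfold is_body; lia)) as [E3x E3y].
  clear Hl.
  unfold sum4 in *. cbn [Nat.eqb] in E1x, E1y, E2x, E2y, E3x, E3y.
  rewrite (rdist_sym q 2 1), (rdist_sym q 3 1), (rdist_sym q 3 2) in *.
  rewrite Hm1, Hm2, Hm3, Hm4 in *.
  assert (P12 : 0 < rdist q 1 2) by (apply rdist_pos, Hdist; unfold is_body; lia).
  assert (P13 : 0 < rdist q 1 3) by (apply rdist_pos, Hdist; unfold is_body; lia).
  assert (P14 : 0 < rdist q 1 4) by (apply rdist_pos, Hdist; unfold is_body; lia).
  assert (P23 : 0 < rdist q 2 3) by (apply rdist_pos, Hdist; unfold is_body; lia).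
  assert (P24 : 0 < rdist q 2 4) by (apply rdist_pos, Hdist; unfold is_body; lia).
  assert (P34 : 0 < rdist q 3 4) by (apply rdist_pos, Hdist; unfold is_body; lia).
  assert (S12 := rdist_sq q 1 2). assert (S13 := rdist_sq q 1 3).
  assert (S14 := rdist_sq q 1 4). assert (S23 := rdist_sq q 2 3).
  assert (S24 := rdist_sq q 2 4). assert (S34 := rdist_sq q 3 4).
  clear Hdist.
  unfold oDelta, absDelta. cbn [Nat.odd Nat.even negb]. rewrite Ropp_involutive.
  replace (sarea (q 1%nat) (q 2%nat) (q 4%nat)) with (sarea (q 4%nat) (q 1%nat) (q 2%nat))
    by (unfold sarea; field).
  f_equal.
  unfold convex_cyclic4 in Hconv.
  set (r12 := rdist q 1 2) in *. set (r13 := rdist q 1 3) in *. set (r14 := rdist q 1 4) in *.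
  set (r23 := rdist q 2 3) in *. set (r24 := rdist q 2 4) in *. set (r34 := rdist q 3 4) in *.
  clearbody r12 r13 r14 r23 r24 r34.
  destruct (q 1%nat) as [x1 y1], (q 2%nat) as [x2 y2], (q 3%nat) as [x3 y3], (q 4%nat) as [x4 y4].
  cbn [fst snd] in Hcx, Hcy, E1x, E1y, E2x, E2y, E3x, E3y, S12, S13, S14, S23, S24, S34.
  exact (core alpha beta x1 y1 x2 y2 x3 y3 x4 y4 r12 r13 r14 r23 r24 r34 lam Ha Hab
    P12 P13 P14 P23 P24 P34 S12 S13 S14 S23 S24 S34 Hcx Hcy E1x E1y E2x E2y E3x E3y Hconv Hd).
Qed.
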